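(* Let $L\subseteq\mathbb{R}^m$ be a lattice with covering radius $R$, and let $C\subseteq\mathbb{R}^m/L$ be finite. The following are equivalent: (i) $C$ is holy; (ii) for every $x,y\in C$ with $x\neq y$, $d(x,y)=R$; (iii) $\min\{d(x,y):x,y\in C,x\neq y\}=R$. Furthermore, (a) every holy code in $\mathbb{R}^m/L$ is optimal, and (b) if there exists a holy code of size $n$ in $\mathbb{R}^m/L$, then every optimal code of size $n$ in $\mathbb{R}^m/L$ is a holy code.
   Context: A lattice is a discrete full-rank subgroup of $\mathbb{R}^m$. The torus $\mathbb{R}^m/L$ has metric $d(x,y):=\min\{\|s-t\|_2:s\in x,t\in y\}$. An optimal code of size $n$ is an $n$-element subset of $\mathbb{R}^m/L$ maximizing the minimum distance between distinct points. The covering radius $R$ of $L$ is the supremum of $r$ such that $\mathbb{R}^m\setminus\bigcup_{x\in L}B(x,r)$ is nonempty; $z\in\mathbb{R}^m$ is a deep hole of $L$ if $\min\{\|z-x\|_2:x\in L\}=R$. A code $C=\{s+L:s\in S\}$ (with $S$ a set of representatives of distinct cosets) is holy if for all $s,t\in S$ with $s\neq t$, $s-t$ is a deep hole of $L$. *)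

(* Defs.v *)
From HB Require Import structures.
From mathcomp Require Import all_boot all_order all_algebra.
From mathcomp Require Import all_classical all_reals.
Set Implicit Arguments. Unset Strict Implicit. Unset Printing Implicit Defensive.
Import Order.TTheory GRing.Theory Num.Theory.
Local Open Scope classical_set_scope.
Local Open Scope ring_scope.

Section Defs.
Variables (R : realType) (m : nat).
Notation V := 'rV[R]_m.

Definition enorm (v : V) : R := Num.sqrt (\sum_(i < m) (v ord0 i) ^+ 2).

Definition ball_e (x : V) (r : R) : set V := [set y | enorm (y - x) < r].

Definition is_lattice (L : set V) : Prop :=
  [/\ L 0,
      (forall x y, L x -> L y -> L (x - y)),
      (forall x, L x -> exists2 e : R, 0 < e &
          forall y, L y -> enorm (y - x) < e -> y = x) &
      (forall v : V, exists k (l : 'I_k -> V) (c : 'I_k -> R),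
          (forall i, L (l i)) /\ v = \sum_(i < k) c i *: l i)].

(* the coset s + L, a point of the torus R^m/L *)
Definition coset (L : set V) (s : V) : set V := [set s + l | l in L].

Definition torus (L : set V) : set (set V) := [set X | exists s, X = coset L s].

(* torus metric d(X,Y) = min {||s - t|| : s in X, t in Y} (the min exists
   for a lattice; we write it as the infimum) *)
Definition tdist (X Y : set V) : R :=
  inf [set r | exists s t, [/\ X s, Y t & r = enorm (s - t)]].

Definition covrad (L : set V) : R :=
  sup [set r | exists z, forall x, L x -> ~ ball_e x r z].

Definition deep_hole (L : set V) (z : V) : Prop :=
  inf [set r | exists2 x, L x & r = enorm (z - x)] = covrad L.

Definition is_code (L : set V) (n : nat) (C : set (set V)) : Prop :=
  C `<=` torus L /\ (C #= `I_n)%card.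

Definition dists (C : set (set V)) : set R :=
  [set r | exists X Y, [/\ C X, C Y, X <> Y & r = tdist X Y]].

Definition mindist (C : set (set V)) : R := inf (dists C).

Definition optimal (L : set V) (n : nat) (C : set (set V)) : Prop :=
  is_code L n C /\ forall C', is_code L n C' -> mindist C' <= mindist C.

Definition holy (L : set V) (C : set (set V)) : Prop :=
  exists S : set V,
    [/\ C = [set coset L s | s in S],
        (forall s t, S s -> S t -> coset L s = coset L t -> s = t) &
        (forall s t, S s -> S t -> s <> t -> deep_hole L (s - t))].

End Defs.

(* Main.v *)
Require Import Defs.
From HB Require Import structures.
From mathcomp Require Import all_boot all_order all_algebra.
From mathcomp Require Import all_classical all_reals.
From mathcomp Require Import lra.
Import Order.TTheory GRing.Theory Num.Theory.
Local Open Scope classical_set_scope.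
Local Open Scope ring_scope.
Set Implicit Arguments. Unset Strict Implicit. Unset Printing Implicit Defensive.

Section Helpers.
Variables (R : realType) (m : nat).
Notation V := 'rV[R]_m.

Definition n1 (v : V) : R := \sum_(i < m) `|v ord0 i|.

Lemma enorm_ge0 (v : V) : 0 <= enorm v.
Proof. exact: sqrtr_ge0. Qed.

Lemma n1_ge0 (v : V) : 0 <= n1 v.
Proof. by apply: sumr_ge0 => i _. Qed.

Lemma enorm_le_n1 (v : V) : enorm v <= n1 v.
Proof.
rewrite /enorm -[X in _ <= X]ger0_norm ?n1_ge0 // -sqrtr_sqr.
apply: ler_wsqrtr.
rewrite expr2 /n1 mulr_suml; apply: ler_sum => i _.
rewrite -real_normK ?num_real // expr2; apply: ler_wpM2l => //.
by rewrite (bigD1 i) //= lerDl; apply: sumr_ge0.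
Qed.

Lemma n1Z (a : R) (v : V) : n1 (a *: v) = `|a| * n1 v.
Proof. by rewrite /n1 mulr_sumr; apply: eq_bigr => i _; rewrite mxE normrM. Qed.

Lemma n1_sum k (f : 'I_k -> V) : n1 (\sum_(j < k) f j) <= \sum_(j < k) n1 (f j).
Proof.
rewrite /n1 exchange_big /=; apply: ler_sum => i _.
by rewrite summxE; apply: ler_norm_sum.
Qed.

Variable L : set V.
Hypothesis HL : is_lattice L.

Lemma L0 : L 0. Proof. by case: HL. Qed.
Lemma LB x y : L x -> L y -> L (x - y). Proof. by case: HL => _ h _ _; apply: h. Qed.
Lemma LN x : L x -> L (- x). Proof. by move=> h; rewrite -sub0r; apply: LB => //; exact: L0. Qed.
Lemma LD x y : L x -> L y -> L (x + y).
Proof. by move=> hx hy; rewrite -[y]opprK; apply: LB => //; apply: LN. Qed.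
Lemma Lmuln x n : L x -> L (x *+ n).
Proof. move=> hx; elim: n => [|n IH]; first by rewrite mulr0n; exact: L0. by rewrite mulrS; apply: LD. Qed.
Lemma Lint x (k : int) : L x -> L (k%:~R *: x).
Proof.
move=> hx; rewrite scaler_int; case: k => n.
  exact: Lmuln.
by rewrite NegzE mulrNz; apply/LN/Lmuln.
Qed.
Lemma Lsum k (f : 'I_k -> V) : (forall i, L (f i)) -> L (\sum_(i < k) f i).
Proof. by move=> h; apply: (big_ind L) => //; [exact: L0 | exact: LD]. Qed.

Lemma scal_approx (v : V) : exists B : R, forall a : R, exists2 x, L x & n1 (a *: v - x) <= B.
Proof.
case: HL => _ _ _ /(_ v) [k [l [c [Ll ->]]]].
exists (\sum_(i < k) n1 (l i)) => a.
exists (\sum_(i < k) (Num.floor (a * c i))%:~R *: l i).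
  by apply: Lsum => i; apply: Lint.
rewrite scaler_sumr -sumrB.
apply: (le_trans (n1_sum _)); apply: ler_sum => i _.
rewrite scalerA -scalerBl n1Z.
rewrite -[X in _ <= X]mul1r; apply: ler_wpM2r; first exact: n1_ge0.
have h1 := floor_le (a * c i); have h2 := floorD1_gt (a * c i).
rewrite intrD in h2.
rewrite ger0_norm; lra.
Qed.

Lemma dist_bound : exists B : R, forall z : V, exists2 x, L x & enorm (z - x) <= B.
Proof.
have /choice [Bf hB] := fun j : 'I_m => scal_approx (delta_mx ord0 j).
exists (\sum_(j < m) Bf j) => z.
have /choice [xf hx] : forall j : 'I_m, exists x, L x /\ n1 (z ord0 j *: delta_mx ord0 j - x) <= Bf j.
  by move=> j; have [x ? ?] := hB j (z ord0 j); exists x.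
exists (\sum_(j < m) xf j); first by apply: Lsum => j; case: (hx j).
apply: (le_trans (enorm_le_n1 _)).
rewrite {1}(row_sum_delta z) -sumrB.
apply: (le_trans (n1_sum _)); apply: ler_sum => j _; by case: (hx j).
Qed.

Definition covset := [set r : R | exists z, forall x, L x -> ~ ball_e x r z].

Lemma covset_ub : has_ubound covset.
Proof.
have [B hB] := dist_bound; exists B => r [z hz].
have [x Lx hxB] := hB z.
have := hz x Lx; rewrite /ball_e /= => /negP; rewrite -leNgt => h.
exact: le_trans h hxB.
Qed.

Definition dL (z : V) : R := inf [set r | exists2 x, L x & r = enorm (z - x)].

Lemma dL_lb z : lbound [set r | exists2 x, L x & r = enorm (z - x)] (dL z).
Proof.
apply: ge_inf; exists 0 => r [x _ ->]; exact: enorm_ge0.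
Qed.

Lemma dL_ge0 z : 0 <= dL z.
Proof.
apply: lb_le_inf; first by exists (enorm (z - 0)), 0 => //; exact: L0.
by move=> r [x _ ->]; exact: enorm_ge0.
Qed.

Lemma dL_le_cov z : dL z <= covrad L.
Proof.
apply: (ub_le_sup covset_ub); exists z => x Lx.
rewrite /ball_e /=; apply/negP; rewrite -leNgt.
by apply: dL_lb; exists x.
Qed.

Lemma tdist_coset s t : tdist (coset L s) (coset L t) = dL (s - t).
Proof.
rewrite /tdist /dL; congr inf; apply/seteqP; split => r /=.
  move=> [_ [_ [[l1 Ll1 <-] [l2 Ll2 <-] ->]]].
  exists (l2 - l1); first exact: LB.
  by rewrite opprB opprD addrACA.
move=> [x Lx ->]; exists (s + 0), (t + x); split.
- by exists 0 => //; exact: L0.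
- by exists x.
- by rewrite addr0 opprD addrA.
Qed.

Lemma torus_tdist_le X Y : torus L X -> torus L Y -> tdist X Y <= covrad L.
Proof. by move=> [s ->] [t ->]; rewrite tdist_coset dL_le_cov. Qed.

Lemma torus_tdist_ge0 X Y : torus L X -> torus L Y -> 0 <= tdist X Y.
Proof. by move=> [s ->] [t ->]; rewrite tdist_coset dL_ge0. Qed.

End Helpers.

Section Main.
Variables (R : realType) (m : nat).
Notation V := 'rV[R]_m.
Variable L : set V.
Hypothesis HL : is_lattice L.

Definition condii (C : set (set V)) :=
  forall X Y, C X -> C Y -> X <> Y -> tdist X Y = covrad L.

Lemma holy_ii C : holy L C -> condii C.
Proof.
move=> [S [-> _ hd]] _ _ [s Ss <-] [t St <-] neq.
have st : s <> t by move=> e; apply: neq; rewrite e.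
by rewrite (tdist_coset HL); apply: hd.
Qed.

Lemma ii_holy C : C `<=` torus L -> condii C -> holy L C.
Proof.
move=> Ct hii.
have /choice [rep hrep] : forall X : set V, exists s, C X -> X = coset L s.
  move=> X; case: (pselect (C X)) => [/Ct [s ->]|nC]; first by exists s.
  by exists 0.
exists (rep @` C); split.
- apply/seteqP; split => X.
    by move=> CX; exists (rep X); [exists X | rewrite -hrep].
  by move=> [_ [Y CY <-] <-]; rewrite -hrep.
- by move=> _ _ [X CX <-] [Y CY <-]; rewrite -hrep // -hrep // => ->.
- move=> _ _ [X CX <-] [Y CY <-] neq.
  have XY : X <> Y by move=> e; apply: neq; rewrite e.
  by rewrite /deep_hole -/(dL L _) -(tdist_coset HL) -hrep // -hrep //; apply: hii.
Qed.

Definition haspair (C : set (set V)) := exists X Y, [/\ C X, C Y & X <> Y].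

Lemma haspair_card n C : (C #= `I_n)%card -> haspair C <-> (1 < n)%N.
Proof.
move=> /card_eqPle [Cn nC]; split.
  move=> [X [Y [CX CY XY]]].
  pose f (i : nat) := if i == 0%N then X else Y.
  have fi : {in `I_2 &, injective f}.
    move=> i j; rewrite !inE /= /f.
    case: i => [|[|i]] //; case: j => [|[|j]] // _ _ e; by exfalso; apply: XY.
  have : (`I_2 #<= `I_n)%card.
    rewrite -(card_le_eql (inj_card_eq fi)).
    apply: card_le_trans Cn; apply: subset_card_le.
    by move=> _ [i _ <-]; rewrite /f; case: eqP.
  by rewrite card_le_II.
move=> n1; apply: contrapT => np.
have [X0 hX0] : exists X0 : set V, C `<=` [set X0].
  case: (pselect (exists X, C X)) => [[X CX]|nCX]; last first.
    by exists set0 => X CX; exfalso; apply: nCX; exists X.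
  exists X => Y CY; apply: contrapT => ne; apply: np; exists X, Y; split => //.
  by move=> e; apply: ne; rewrite e.
have : (`I_n #<= `I_1)%card.
  apply: card_le_trans nC _; rewrite -(card_le_eqr (@card_set1 _ X0)).
  exact: subset_card_le.
by rewrite card_le_II; case: n n1 {Cn nC} => [|[|]].
Qed.

Lemma nopair_dists C : ~ haspair C -> dists C = set0.
Proof.
move=> np; apply/seteqP; split => // r [X [Y [CX CY XY _]]].
by apply: np; exists X, Y.
Qed.

Lemma pair_mindist C : C `<=` torus L -> haspair C -> mindist C <= covrad L.
Proof.
move=> Ct [X [Y [CX CY XY]]].
apply: (le_trans (y := tdist X Y)).
  apply: ge_inf; last by exists X, Y.
  exists 0 => r [X' [Y' [CX' CY' _ ->]]].
  by apply: (torus_tdist_ge0 HL); apply: Ct.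
by apply: (torus_tdist_le HL); apply: Ct.
Qed.

Lemma ii_mindist C : haspair C -> condii C -> mindist C = covrad L.
Proof.
move=> [X [Y [CX CY XY]]] hii.
rewrite /mindist (_ : dists C = [set covrad L]) ?inf1 //.
apply/seteqP; split => r.
  by move=> [X' [Y' [CX' CY' ne ->]]]; rewrite /= hii.
by move=> ->; exists X, Y; split => //; rewrite hii.
Qed.

End Main.

Theorem lemma4p9 (R : realType) (m : nat) (L : set 'rV[R]_m) :
  is_lattice L ->
  (forall C : set (set 'rV[R]_m), C `<=` torus L -> finite_set C ->
     (holy L C <->
        (forall X Y, C X -> C Y -> X <> Y -> tdist X Y = covrad L)) /\
     ((exists X Y, [/\ C X, C Y & X <> Y]) ->
       ((forall X Y, C X -> C Y -> X <> Y -> tdist X Y = covrad L) <->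
        (dists C (covrad L) /\ (forall r, dists C r -> covrad L <= r))))) /\
  (forall (n : nat) (C : set (set 'rV[R]_m)),
     is_code L n C -> holy L C -> optimal L n C) /\
  (forall n : nat,
     (exists C, is_code L n C /\ holy L C) ->
     forall C, optimal L n C -> holy L C).
Proof.
move=> HL; split; [|split].
- move=> C Ct _; split.
    by split; [exact: holy_ii | exact: ii_holy].
  move=> [X [Y [CX CY XY]]]; split.
    move=> hii; split; first by exists X, Y; split => //; rewrite hii.
    by move=> r [X' [Y' [CX' CY' ne ->]]]; rewrite hii.
  move=> [_ hge] X' Y' CX' CY' ne; apply/eqP; rewrite eq_le; apply/andP; split.
    by apply: (torus_tdist_le HL); apply: Ct.
  by apply: hge; exists X', Y'.
- move=> n C [Ct Cn] hC; split => // C' [C't C'n].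
  have hii := holy_ii HL hC.
  case: (pselect (haspair C)) => hp.
    rewrite (ii_mindist hp hii).
    apply: (pair_mindist HL C't).
    by apply/(haspair_card C'n)/(haspair_card Cn).
  have hp' : ~ haspair C'.
    by move=> /(haspair_card C'n)/(haspair_card Cn).
  by rewrite /mindist !nopair_dists.
- move=> n [C0 [[C0t C0n] h0]] C [[Ct Cn] hopt].
  apply: (ii_holy HL Ct).
  case: (pselect (haspair C)) => hp; last first.
    by move=> X Y CX CY XY; exfalso; apply: hp; exists X, Y.
  have hp0 : haspair C0 by apply/(haspair_card C0n)/(haspair_card Cn).
  have hm : covrad L <= mindist C.
    by rewrite -(ii_mindist hp0 (holy_ii HL h0)); apply: hopt.
  move=> X Y CX CY XY; apply/eqP; rewrite eq_le; apply/andP; split.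
    by apply: (torus_tdist_le HL); apply: Ct.
  apply: (le_trans hm); apply: ge_inf; last by exists X, Y.
  exists 0 => r [X' [Y' [CX' CY' _ ->]]].
  by apply: (torus_tdist_ge0 HL); apply: Ct.
Qed.
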